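(* For every $n\ge 1$, $\min^-_{\omega+1}\not\le_{\mathrm{W}}\operatorname{BWT}_n$.
   Context: Represented spaces: a representation of a set $X$ is a partial surjection $\delta_X:\subseteq\mathbb{N}^\mathbb{N}\to X$. For a partial multi-valued function $f:\subseteq X\rightrightarrows Y$, a realizer is a partial $F:\subseteq\mathbb{N}^\mathbb{N}\to\mathbb{N}^\mathbb{N}$ with $\delta_Y(F(p))\in f(\delta_X(p))$ for all $p$ with $\delta_X(p)\in\mathrm{dom}(f)$. Weihrauch reducibility: $f\le_{\mathrm{W}} g$ iff there are computable partial $H:\subseteq\mathbb{N}^\mathbb{N}\times\mathbb{N}^\mathbb{N}\to\mathbb{N}^\mathbb{N}$ and $K:\subseteq\mathbb{N}^\mathbb{N}\to\mathbb{N}^\mathbb{N}$ such that $p\mapsto H(p,G(K(p)))$ is a realizer of $f$ for every realizer $G$ of $g$. $\omega+1:=\{-2^{-n}:n\in\mathbb{N}\}\cup\{0\}\subseteq\mathbb{R}$, a computable metric space with the Euclidean metric and dense set $\omega+1$ itself; points are represented by the Cauchy representation. Closed subsets of $\omega+1$ are represented negatively ($\mathcal{A}_-(\omega+1)$): a name of a closed $A$ is an enumeration of basic open balls $B(a,q)$ ($a\in\omega+1$, $q$ a nonnegative rational) whose union is $(\omega+1)\setminus A$. $\min^-_{\omega+1}:\subseteq\mathcal{A}_-(\omega+1)\to\omega+1$ maps each nonempty closed $A$ to $\min A$. For $n\ge1$, $\operatorname{BWT}_n:\subseteq\{0,\dots,n-1\}^\mathbb{N}\rightrightarrows\{0,\dots,n-1\}$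 (discrete space $\{0,\dots,n-1\}$) maps a sequence to the set of its cluster points, i.e. the values that occur infinitely often. *)

(* Defs.v *)
From Stdlib Require Import Reals Arith Cantor.
Open Scope R_scope.

Definition Baire := nat -> nat.

Definition npair (x y : nat) : nat := Cantor.to_nat (x, y).
Definition nunpair (n : nat) : nat * nat := Cantor.of_nat n.

(** Syntax of (unary) partial recursive functions relative to an oracle,
    using Cantor pairing for tuples. *)
Inductive prog : Type :=
| PZero : prog
| PSucc : prog
| PId : prog
| PFst : prog
| PSnd : prog
| POracle : prog
| PComp : prog -> prog -> prog
| PPair : prog -> prog -> prog
| PRec : prog -> prog -> prog
| PMu : prog -> prog.

Inductive eval (p : Baire) : prog -> nat -> nat -> Prop :=
| ev_zero x : eval p PZero x 0
| ev_succ x : eval p PSucc x (S x)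
| ev_id x : eval p PId x x
| ev_fst x : eval p PFst x (fst (nunpair x))
| ev_snd x : eval p PSnd x (snd (nunpair x))
| ev_oracle x : eval p POracle x (p x)
| ev_comp f g x y z : eval p g x y -> eval p f y z -> eval p (PComp f g) x z
| ev_pair f g x y z : eval p f x y -> eval p g x z ->
    eval p (PPair f g) x (npair y z)
| ev_rec0 f g x a r : nunpair x = (a, 0%nat) -> eval p f a r ->
    eval p (PRec f g) x r
| ev_recS f g x a b r' r : nunpair x = (a, S b) ->
    eval p (PRec f g) (npair a b) r' ->
    eval p g (npair a (npair b r')) r ->
    eval p (PRec f g) x r
| ev_mu f x y : eval p f (npair x y) 0%nat ->
    (forall z, (z < y)%nat -> exists v, v <> 0%nat /\ eval p f (npair x z) v) ->
    eval p (PMu f) x y.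

Definition computes (e : prog) (p q : Baire) : Prop :=
  forall n, eval p e n (q n).

Definition bpair (p q : Baire) : Baire :=
  fun n => if Nat.even n then p (Nat.div2 n) else q (Nat.div2 n).

(** A representation of X is given as a relation [delta p x] ("p is a name
    of x"); a partial multi-valued function [f : X ⇉ Y] is given by its
    domain [domf] and the relation [f x y] ("y ∈ f(x)"). *)
Definition realizer {X Y : Type} (dX : Baire -> X -> Prop)
    (dY : Baire -> Y -> Prop) (domf : X -> Prop) (f : X -> Y -> Prop)
    (F : Baire -> Baire) : Prop :=
  forall p x, dX p x -> domf x -> exists y, dY (F p) y /\ f x y.

(** f ≤_W g : there are computable partial H, K such that
    p |-> H(p, G(K p)) realizes f for every realizer G of g.
    (Realizers G may be taken total w.l.o.g.; H and K are partial:
    definedness is part of the requirement.) *)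
Definition Wle {X Y U V : Type}
    (dX : Baire -> X -> Prop) (dY : Baire -> Y -> Prop)
    (domf : X -> Prop) (f : X -> Y -> Prop)
    (dU : Baire -> U -> Prop) (dV : Baire -> V -> Prop)
    (domg : U -> Prop) (g : U -> V -> Prop) : Prop :=
  exists H K : prog,
    forall G : Baire -> Baire, realizer dU dV domg g G ->
      forall p x, dX p x -> domf x ->
        exists k, computes K p k /\
        exists r, computes H (bpair p (G k)) r /\
        exists y, dY r y /\ f x y.

Definition omega1 (x : R) : Prop := x = 0 \/ exists n : nat, x = - (/2) ^ n.

(** Numbering of the dense set ω+1: 0 |-> 0, k+1 |-> -2^{-k}. *)
Definition alpha (k : nat) : R :=
  match k with O => 0 | S k' => - (/2) ^ k' end.

Definition delta_omega1 (p : Baire) (x : R) : Prop :=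
  omega1 x /\
  (forall i j : nat, (i <= j)%nat ->
      Rabs (alpha (p i) - alpha (p j)) <= (/2) ^ i) /\
  Un_cv (fun i => alpha (p i)) x.

(** Basic open balls B(a,q), a ∈ ω+1, q ≥ 0 rational, coded by naturals:
    n codes (alpha a, num/(den+1)) where n = <a, <num, den>>. *)
Definition ball_center (n : nat) : R := alpha (fst (nunpair n)).
Definition ball_radius (n : nat) : R :=
  let c := nunpair (snd (nunpair n)) in
  INR (fst c) / INR (S (snd c)).
Definition in_ball (n : nat) (x : R) : Prop :=
  omega1 x /\ Rabs (x - ball_center n) < ball_radius n.

Definition delta_closed_neg (p : Baire) (A : R -> Prop) : Prop :=
  forall x, A x <-> (omega1 x /\ forall i, ~ in_ball (p i) x).

Definition min_dom (A : R -> Prop) : Prop := exists x, A x.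
Definition min_rel (A : R -> Prop) (y : R) : Prop :=
  A y /\ forall z, A z -> y <= z.

Definition delta_seq (n : nat) (p : Baire) (s : nat -> nat) : Prop :=
  (forall i, (p i < n)%nat) /\ (forall i, s i = p i).

Definition delta_fin (n : nat) (p : Baire) (k : nat) : Prop :=
  (k < n)%nat /\ p 0%nat = k.

Definition BWT_dom (n : nat) (s : nat -> nat) : Prop := forall i, (s i < n)%nat.
Definition BWT_rel (n : nat) (s : nat -> nat) (k : nat) : Prop :=
  (k < n)%nat /\ forall N, exists m, (N <= m)%nat /\ s m = k.

(* Main.v *)
Require Import Defs.
From Stdlib Require Import Reals Arith Cantor Lia List Classical ClassicalEpsilon Lra.

Definition eval_ind2 (p : Baire) (P : prog -> nat -> nat -> Prop)
  (Hzero : forall x, P PZero x 0%nat)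
  (Hsucc : forall x, P PSucc x (S x))
  (Hid : forall x, P PId x x)
  (Hfst : forall x, P PFst x (fst (nunpair x)))
  (Hsnd : forall x, P PSnd x (snd (nunpair x)))
  (Horc : forall x, P POracle x (p x))
  (Hcomp : forall f g x y z, eval p g x y -> P g x y -> eval p f y z -> P f y z -> P (PComp f g) x z)
  (Hpair : forall f g x y z, eval p f x y -> P f x y -> eval p g x z -> P g x z -> P (PPair f g) x (npair y z))
  (Hrec0 : forall f g x a r, nunpair x = (a, 0%nat) -> eval p f a r -> P f a r -> P (PRec f g) x r)
  (HrecS : forall f g x a b r' r, nunpair x = (a, S b) ->
    eval p (PRec f g) (npair a b) r' -> P (PRec f g) (npair a b) r' ->
    eval p g (npair a (npair b r')) r -> P g (npair a (npair b r')) r -> P (PRec f g) x r)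
  (Hmu : forall f x y, eval p f (npair x y) 0%nat -> P f (npair x y) 0%nat ->
    (forall z, (z < y)%nat -> exists v, v <> 0%nat /\ eval p f (npair x z) v /\ P f (npair x z) v) ->
    P (PMu f) x y) :
  forall e x y, eval p e x y -> P e x y :=
  fix F e x y (H : eval p e x y) {struct H} : P e x y :=
  match H in eval _ e x y return P e x y with
  | ev_zero _ x => Hzero x
  | ev_succ _ x => Hsucc x
  | ev_id _ x => Hid x
  | ev_fst _ x => Hfst x
  | ev_snd _ x => Hsnd x
  | ev_oracle _ x => Horc x
  | ev_comp _ f g x y z H1 H2 => Hcomp f g x y z H1 (F _ _ _ H1) H2 (F _ _ _ H2)
  | ev_pair _ f g x y z H1 H2 => Hpair f g x y z H1 (F _ _ _ H1) H2 (F _ _ _ H2)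
  | ev_rec0 _ f g x a r E H1 => Hrec0 f g x a r E H1 (F _ _ _ H1)
  | ev_recS _ f g x a b r' r E H1 H2 => HrecS f g x a b r' r E H1 (F _ _ _ H1) H2 (F _ _ _ H2)
  | ev_mu _ f x y H0 Hz => Hmu f x y H0 (F _ _ _ H0)
      (fun z hz => match Hz z hz with
                   | ex_intro _ v (conj hv ev) => ex_intro _ v (conj hv (conj ev (F _ _ _ ev)))
                   end)
  end.

Lemma eval_det (p : Baire) e x y1 : eval p e x y1 -> forall y2, eval p e x y2 -> y1 = y2.
Proof.
  revert e x y1.
  apply (eval_ind2 p (fun e x y1 => forall y2, eval p e x y2 -> y1 = y2));
    intros; try (inversion H; subst; reflexivity).
  - inversion H3; subst. match goal with | h1 : eval p g x ?w, h2 : eval p f ?w y2 |- _ => apply H2; rewrite (H0 _ h1); exact h2 end.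
  - inversion H3; subst. match goal with | h1 : eval p f x ?a, h2 : eval p g x ?b |- _ => rewrite (H0 _ h1), (H2 _ h2); reflexivity end.
  - inversion H2; subst.
    + match goal with h : nunpair x = _ |- _ => rewrite H in h; injection h as <- end; apply H1; assumption.
    + match goal with h : nunpair x = _ |- _ => rewrite H in h; discriminate end.
  - inversion H4; subst.
    + match goal with h : nunpair x = _ |- _ => rewrite H in h; discriminate end.
    + match goal with h : nunpair x = _ |- _ => rewrite H in h; injection h as <- <- end.
      match goal with h : eval p (PRec f g) (npair a b) ?w |- _ => assert (r' = w) by (apply H1; exact h) end. subst.
      apply H3; assumption.
  - inversion H2; subst.
    destruct (lt_eq_lt_dec y y2) as [[Hl|Hl]|Hl]; auto.
    + match goal with h : forall z, (z < y2)%nat -> _ |- _ => destruct (h y Hl) as [v [hv ev]] end. exfalso. apply hv. symmetry. apply H0. exact ev.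
    + destruct (H1 y2 Hl) as [v [hv [ev IH]]]. exfalso. apply hv. apply IH. assumption.
Qed.

Definition agree (q p : Baire) (N : nat) := forall i, (i < N)%nat -> q i = p i.

Lemma agree_mono q p N M : (M <= N)%nat -> agree q p N -> agree q p M.
Proof. intros H A i Hi. apply A. lia. Qed.

Lemma eval_cont (p : Baire) e x y : eval p e x y ->
  exists N, forall q, agree q p N -> eval q e x y.
Proof.
  revert e x y.
  apply (eval_ind2 p (fun e x y => exists N, forall q, agree q p N -> eval q e x y));
    intros.
  - exists 0%nat; intros; constructor.
  - exists 0%nat; intros; constructor.
  - exists 0%nat; intros; constructor.
  - exists 0%nat; intros; constructor.
  - exists 0%nat; intros; constructor.
  - exists (S x); intros q A. rewrite <- (A x) by lia. constructor.
  - destruct H0 as [N1 H0], H2 as [N2 H2]. exists (N1 + N2)%nat; intros q A.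
    econstructor; [apply H0|apply H2]; eapply agree_mono; try eassumption; lia.
  - destruct H0 as [N1 H0], H2 as [N2 H2]. exists (N1 + N2)%nat; intros q A.
    econstructor; [apply H0|apply H2]; eapply agree_mono; try eassumption; lia.
  - destruct H1 as [N1 H1]. exists N1; intros q A. eapply ev_rec0; eauto.
  - destruct H1 as [N1 H1], H3 as [N2 H3]. exists (N1 + N2)%nat; intros q A.
    eapply ev_recS; eauto; [apply H1|apply H3]; eapply agree_mono; try eassumption; lia.
  - destruct H0 as [N0 H0].
    assert (K : forall y', (y' <= y)%nat -> exists N, forall q, agree q p N ->
      forall z, (z < y')%nat -> exists v, v <> 0%nat /\ eval q f (npair x z) v).
    { induction y' as [|y' IHy]; intros Hy.
      - exists 0%nat; intros; lia.
      - destruct IHy as [N1 HN1]; [lia|].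
        destruct (H1 y' ltac:(lia)) as [v [hv [_ [N2 HN2]]]].
        exists (N1 + N2)%nat; intros q A z Hz.
        destruct (Nat.eq_dec z y') as [->|Hne].
        + exists v; split; auto. apply HN2. eapply agree_mono; try eassumption; lia.
        + apply (HN1 q); [eapply agree_mono; try eassumption; lia| lia]. }
    destruct (K y (le_n _)) as [N1 HN1].
    exists (N0 + N1)%nat; intros q A. constructor.
    + apply H0; eapply agree_mono; try eassumption; lia.
    + apply HN1; [eapply agree_mono; try eassumption; lia].
Qed.
Open Scope R_scope.

Lemma half_pow_pos k : 0 < (/2)^k.
Proof. apply pow_lt; lra. Qed.

Lemma half_pow_le1 k : (/2)^k <= 1.
Proof. induction k; simpl; [lra|]. pose proof (half_pow_pos k). lra. Qed.

Lemma half_pow_mono j m : (j <= m)%nat -> (/2)^m <= (/2)^j.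
Proof.
  intros H. replace m with (j + (m - j))%nat by lia. rewrite pow_add.
  pose proof (half_pow_pos j). pose proof (half_pow_le1 (m-j)).
  pose proof (half_pow_pos (m-j)). nra.
Qed.

Lemma omega1_bounds x : omega1 x -> -1 <= x <= 0.
Proof.
  intros [->|[k ->]]; [lra|]. pose proof (half_pow_pos k). pose proof (half_pow_le1 k). lra.
Qed.

Definition bcode (j : nat) : nat := npair 1 (npair (2^j - 1) (2^j - 1)).

Lemma nunpair_npair a b : nunpair (npair a b) = (a, b).
Proof. apply Cantor.cancel_of_to. Qed.

Lemma in_bcode j x : in_ball (bcode j) x <-> omega1 x /\ x < - (/2)^j.
Proof.
  unfold in_ball, ball_center, ball_radius, bcode. rewrite !nunpair_npair. simpl fst; simpl snd.
  assert (E : (S (2^j - 1) = 2^j)%nat).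
  { pose proof (Nat.pow_nonzero 2 j ltac:(lia)). lia. }
  rewrite !nunpair_npair; simpl fst; simpl snd. rewrite E. rewrite minus_INR by (pose proof (Nat.pow_nonzero 2 j ltac:(lia)); lia).
  rewrite pow_INR. simpl INR. replace (1+1) with 2 by lra.
  assert (R : (2^j - 1) / 2^j = 1 - (/2)^j).
  { rewrite pow_inv. field. apply pow_nonzero. lra. }
  rewrite R. simpl alpha.
  split; intros [Ho Hx]; split; auto; apply omega1_bounds in Ho.
  - rewrite Rabs_right in Hx; lra.
  - rewrite Rabs_right; lra.
Qed.

Definition Aset (m : nat) (x : R) : Prop := omega1 x /\ - (/2)^m <= x.

Definition ext (s : Baire) (L m : nat) : Baire :=
  fun i => if Nat.ltb i L then s i else bcode m.

Definition good (s : Baire) (L m : nat) : Prop :=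
  forall i, (i < L)%nat -> exists j, (j <= m)%nat /\ s i = bcode j.

Lemma ext_names s L m : good s L m -> delta_closed_neg (ext s L m) (Aset m).
Proof.
  intros G x. unfold Aset. split.
  - intros [Ho Hx]. split; auto. intros i Hb. unfold ext in Hb.
    destruct (Nat.ltb_spec i L).
    + destruct (G i H) as [j [Hj E]]. rewrite E in Hb. apply in_bcode in Hb.
      pose proof (half_pow_mono j m Hj). lra.
    + apply in_bcode in Hb. lra.
  - intros [Ho Hi]. split; auto. specialize (Hi L). unfold ext in Hi.
    rewrite Nat.ltb_irrefl in Hi. rewrite in_bcode in Hi.
    destruct (Rlt_or_le x (- (/2)^m)); auto. exfalso; auto.
Qed.

Lemma Aset_min m y : min_rel (Aset m) y -> y = - (/2)^m.
Proof.
  intros [[_ H1] H2]. assert (Aset m (- (/2)^m)) by (split; [right; exists m; auto| lra]).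
  specialize (H2 _ H). lra.
Qed.

Lemma Aset_dom m : min_dom (Aset m).
Proof. exists (- (/2)^m). split; [right; exists m; auto| lra]. Qed.

Lemma cauchy_bnd r y i : delta_omega1 r y -> Rabs (alpha (r i) - y) <= (/2)^i.
Proof.
  intros [_ [Hc Hl]]. destruct (Rle_or_lt (Rabs (alpha (r i) - y)) ((/2)^i)); auto.
  exfalso. destruct (Hl (Rabs (alpha (r i) - y) - (/2)^i)) as [N HN]; [lra|].
  specialize (HN (max N i) (Nat.le_max_l _ _)). unfold R_dist in HN.
  specialize (Hc i (max N i) (Nat.le_max_r _ _)).
  pose proof (Rabs_triang (alpha (r i) - alpha (r (max N i))) (alpha (r (max N i)) - y)).
  replace (alpha (r i) - alpha (r (Init.Nat.max N i)) + (alpha (r (Init.Nat.max N i)) - y))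
    with (alpha (r i) - y) in H0 by ring. lra.
Qed.

Lemma key_ineq a m y : Rabs (a + (/2)^m) <= (/2)^(S (S (S m))) -> - (/2)^(S m) <= y ->
  (/2)^(S (S (S m))) < Rabs (a - y).
Proof.
  simpl. intros H1 H2. pose proof (half_pow_pos m).
  assert (a + (/2)^m <= /2 * (/2 * (/2 * (/2)^m))) by (eapply Rle_trans; [apply RRle_abs|exact H1]).
  rewrite Rabs_left1; lra.
Qed.
Open Scope R_scope.

Lemma pigeon (n : nat) (s : nat -> nat) : (forall i, (s i < n)%nat) ->
  exists c, BWT_rel n s c.
Proof.
  intros Hs. apply NNPP; intro Hno.
  assert (Hc : forall c, (c < n)%nat -> exists N, forall m, (N <= m)%nat -> s m <> c).
  { intros c Hc. apply NNPP; intro H1. apply Hno. exists c. split; auto. intros N.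
    apply NNPP; intro H2. apply H1. exists N. intros m Hm E. apply H2. exists m; auto. }
  assert (K : forall k, (k <= n)%nat -> exists N, forall c, (c < k)%nat -> forall m, (N <= m)%nat -> s m <> c).
  { induction k; intros Hk.
    - exists 0%nat; intros; lia.
    - destruct IHk as [N1 H1]; [lia|]. destruct (Hc k) as [N2 H2]; [lia|].
      exists (N1 + N2)%nat. intros c Hc' m Hm.
      destruct (Nat.eq_dec c k) as [->|Hne]; [apply H2; lia| apply H1; lia]. }
  destruct (K n (le_n _)) as [N HN]. apply (HN (s N) (Hs N) N (le_n _)). reflexivity.
Qed.

Definition G0 (n : nat) (q : Baire) : Baire :=
  fun _ => epsilon (inhabits 0%nat)
    (fun c => (c < n)%nat /\ ((exists c', BWT_rel n q c') -> BWT_rel n q c)).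

Lemma G0_spec n q : (1 <= n)%nat -> (G0 n q 0%nat < n)%nat /\
   ((exists c', BWT_rel n q c') -> BWT_rel n q (G0 n q 0%nat)).
Proof.
  intros Hn. unfold G0. apply epsilon_spec.
  destruct (classic (exists c', BWT_rel n q c')) as [[c' Hc']|Hno].
  - exists c'. split; [apply Hc'| auto].
  - exists 0%nat. split; [lia| tauto].
Qed.

Lemma G0_realizer n : (1 <= n)%nat ->
  realizer (delta_seq n) (delta_fin n) (BWT_dom n) (BWT_rel n) (G0 n).
Proof.
  intros Hn p s [Hp Es] Hd. destruct (G0_spec n p Hn) as [H1 H2].
  exists (G0 n p 0%nat). split; [split; auto|].
  destruct (H2 (pigeon n p Hp)) as [_ H3]. split; auto.
  intros N. destruct (H3 N) as [m [Hm E]]. exists m. rewrite Es. auto.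
Qed.

Lemma bpair_agree p q g N : agree q p N -> agree (bpair q g) (bpair p g) N.
Proof.
  intros A i Hi. unfold bpair. destruct (Nat.even i); auto.
  apply A. pose proof (Nat.le_div2_diag_l i). lia.
Qed.

Definition dead (H : prog) (s : Baire) (L m c : nat) : Prop :=
  exists i0 v, (forall p', agree p' s L -> eval (bpair p' (fun _ => c)) H i0 v) /\
    (forall y, - (/2)^m <= y -> (/2)^i0 < Rabs (alpha v - y)).

Lemma no_reduction (n : nat) (H : prog)
  (Fact : forall p A, delta_closed_neg p A -> min_dom A -> exists c, (c < n)%nat /\
     exists r, computes H (bpair p (fun _ => c)) r /\ exists y, delta_omega1 r y /\ min_rel A y) :
  False.
Proof.
  assert (Ind : forall k, exists s L m l, good s L m /\ NoDup l /\ length l = k /\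
     forall c, In c l -> (c < n)%nat /\ dead H s L m c).
  { induction k.
    - exists (fun _ => 0%nat), 0%nat, 0%nat, nil. split; [intros i Hi; lia|].
      split; [constructor|]. split; auto. intros c [].
    - destruct IHk as [s [L [m [l [Hg [Hnd [Hlen Hl]]]]]]].
      set (p := ext s L m).
      destruct (Fact p (Aset m) (ext_names s L m Hg) (Aset_dom m)) as
        [c [Hcn [r [Hr [y [Hy Hmin]]]]]].
      apply Aset_min in Hmin. subst y.
      assert (Hpa : agree p s L).
      { intros i Hi. unfold p, ext. apply Nat.ltb_lt in Hi. rewrite Hi. auto. }
      assert (Hnot : ~ In c l).
      { intros Hin. destruct (Hl c Hin) as [_ [i0 [v [Hev Hfar]]]].
        specialize (Hev p Hpa). pose proof (eval_det _ _ _ _ Hev _ (Hr i0)) as ->.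
        specialize (Hfar (- (/2)^m) (Rle_refl _)).
        pose proof (cauchy_bnd r _ i0 Hy). lra. }
      destruct (eval_cont _ _ _ _ (Hr (S (S (S m))))) as [N HN].
      exists p, (max L N), (S m), (c :: l). split; [|split; [|split]].
      + intros i Hi. unfold p, ext. destruct (Nat.ltb_spec i L).
        * destruct (Hg i H0) as [j [Hj E]]. exists j; split; auto.
        * exists m; split; auto.
      + constructor; auto.
      + simpl; lia.
      + intros c' [<-|Hin].
        * split; auto. exists (S (S (S m))), (r (S (S (S m)))). split.
          -- intros p' A. apply HN. apply bpair_agree. eapply agree_mono; [|exact A]. lia.
          -- intros y Hy'. apply key_ineq; auto.
             pose proof (cauchy_bnd r _ (S (S (S m))) Hy).
             replace (alpha (r (S (S (S m)))) + (/2)^m) with (alpha (r (S (S (S m)))) - - (/2)^m) by ring.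
             auto.
        * destruct (Hl c' Hin) as [Hc' [i0 [v [Hev Hfar]]]]. split; auto.
          exists i0, v. split.
          -- intros p' A. apply Hev. intros i Hi. rewrite (A i) by lia.
             apply Hpa; auto.
          -- intros y Hy'. apply Hfar. simpl in Hy'. pose proof (half_pow_pos m). lra. }
  destruct (Ind (S n)) as [s [L [m [l [_ [Hnd [Hlen Hl]]]]]]].
  assert (Hinc : incl l (seq 0 n)).
  { intros c Hc. apply in_seq. destruct (Hl c Hc). lia. }
  pose proof (NoDup_incl_length Hnd Hinc). rewrite length_seq in H0. lia.
Qed.

Theorem proposition3p4 : forall n : nat, (1 <= n)%nat ->
  ~ Wle delta_closed_neg delta_omega1 min_dom min_rel
        (delta_seq n) (delta_fin n) (BWT_dom n) (BWT_rel n).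
Proof.
  intros n Hn [H [K HW]].
  apply (no_reduction n H). intros p A Hp Hd.
  destruct (HW (G0 n) (G0_realizer n Hn) p A Hp Hd) as [k [Hk [r [Hr Hy]]]].
  exists (G0 n k 0%nat). split; [apply (proj1 (G0_spec n k Hn))|].
  exists r. split; [exact Hr|exact Hy].
Qed.
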